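(* Let $C,A_1,\dots,A_m\in\mathbb{S}^n$, $b\in\mathbb{R}^m$, and write $\mathcal{L}(y)=C-\sum_{i=1}^my_iA_i$. Let $(U,V)\in\mathbb{R}^{n\times n}$ be invertible with $U\in\mathbb{R}^{n\times d}$, $V\in\mathbb{R}^{n\times(n-d)}$, $U^TV=0$. Consider the problem (R/D-SDP): minimize $C\cdot X$ subject to $A_i\cdot X=b_i$ ($i=1,\dots,m$) and $X=(U,V)\begin{pmatrix}W&Z\\Z^T&R\end{pmatrix}(U,V)^T$ with $W\in\mathbb{S}^d_+$, $R\in\mathbb{S}^{n-d}$, $Z\in\mathbb{R}^{d\times(n-d)}$. Assume (R/D-SDP) has an optimal solution and that $$\{y\in\mathbb{R}^m: V^T\mathcal{L}(y)V=0\}=\{y\in\mathbb{R}^m: V^T\mathcal{L}(y)V=0,\ V^T\mathcal{L}(y)U=0\}.$$ Then (R/D-SDP) has an optimal solution with $Z=0$.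
   Context: $\mathbb{S}^n$ is the space of real symmetric $n\times n$ matrices with trace inner product $A\cdot B=\operatorname{trace}(AB)$; $\mathbb{S}^d_+$ is the positive semidefinite cone. *)

(* Defs.v *)
From HB Require Import structures.
From mathcomp Require Import all_boot all_order all_algebra.
From mathcomp Require Import reals.
Set Implicit Arguments. Unset Strict Implicit. Unset Printing Implicit Defensive.
Import Order.TTheory GRing.Theory Num.Theory.
Local Open Scope ring_scope.

Section Defs.
Variable R : realType.

Definition symmx (n : nat) (A : 'M[R]_n) : Prop := A^T = A.

Definition psdmx (n : nat) (A : 'M[R]_n) : Prop :=
  symmx A /\ forall x : 'cV[R]_n, 0 <= (x^T *m A *m x) 0 0.

Definition mxdot (n : nat) (A B : 'M[R]_n) : R := \tr (A *m B).

Definition Lmap (n m : nat) (C : 'M[R]_n) (A : 'I_m -> 'M[R]_n) (y : 'I_m -> R)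
  : 'M[R]_n := C - \sum_(i < m) y i *: A i.

(* X = (U,V) [W Z; Z^T Rm] (U,V)^T ; here n = d + k, k = n - d *)
Definition facemx (d k : nat) (U : 'M[R]_(d + k, d)) (V : 'M[R]_(d + k, k))
  (W : 'M[R]_d) (Z : 'M[R]_(d, k)) (Rm : 'M[R]_k) : 'M[R]_(d + k) :=
  row_mx U V *m block_mx W Z Z^T Rm *m (row_mx U V)^T.

Definition RD_feasible (d k m : nat) (A : 'I_m -> 'M[R]_(d + k)) (b : 'I_m -> R)
  (U : 'M[R]_(d + k, d)) (V : 'M[R]_(d + k, k))
  (W : 'M[R]_d) (Z : 'M[R]_(d, k)) (Rm : 'M[R]_k) : Prop :=
  psdmx W /\ symmx Rm /\
  forall i : 'I_m, mxdot (A i) (facemx U V W Z Rm) = b i.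

Definition RD_optimal (d k m : nat) (C : 'M[R]_(d + k))
  (A : 'I_m -> 'M[R]_(d + k)) (b : 'I_m -> R)
  (U : 'M[R]_(d + k, d)) (V : 'M[R]_(d + k, k))
  (W : 'M[R]_d) (Z : 'M[R]_(d, k)) (Rm : 'M[R]_k) : Prop :=
  RD_feasible A b U V W Z Rm /\
  forall (W' : 'M[R]_d) (Z' : 'M[R]_(d, k)) (Rm' : 'M[R]_k),
    RD_feasible A b U V W' Z' Rm' ->
    mxdot C (facemx U V W Z Rm) <= mxdot C (facemx U V W' Z' Rm').

End Defs.

(* Main.v *)
From HB Require Import structures.
From mathcomp Require Import all_boot all_order all_algebra.
From mathcomp Require Import reals lra ring.
Require Import Defs.
Set Implicit Arguments. Unset Strict Implicit.
Import Order.TTheory GRing.Theory Num.Theory.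
Local Open Scope ring_scope.
Section S.
Variable R : realType.
Lemma trvec p q (X S : 'M[R]_(p, q)) :
  \tr (X *m S^T) = (mxvec X *m (mxvec S)^T) 0 0.
Proof.
rewrite /mxtrace mxE.
under eq_bigr do rewrite mxE.
under [RHS]eq_bigr do rewrite mxE.
under eq_bigr do under eq_bigr do rewrite mxE.
rewrite pair_big /=.
rewrite (reindex (fun pp : 'I_p * 'I_q => mxvec_index pp.1 pp.2)) /=.
  by apply: eq_bigr => -[i j] _ /=; rewrite !mxvecE.
case: (curry_mxvec_bij p q) => g h1 h2; exists g => [[i j]|k] _ /=.
  exact: (h1 (i, j)).
by case: (g k) (h2 k isT) => a b.
Qed.

Lemma rowspace_dual p q (G : 'M[R]_(p, q)) (c : 'rV_q) :
  (forall x : 'cV_q, G *m x = 0 -> c *m x = 0) -> exists y : 'rV_p, c = y *m G.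
Proof.
move=> H; exists (c *m pinvmx G); rewrite mulmxKpV //.
rewrite submxE; apply/eqP/matrixP => i j; rewrite [RHS]mxE.
have := H (cokermx G *m delta_mx j 0).
rewrite mulmxA mulmx_coker mul0mx => /(_ erefl).
rewrite mulmxA -colE => /matrixP /(_ i 0).
by rewrite !mxE.
Qed.

Lemma Gentry p q m (B : 'I_m -> 'M[R]_(p, q)) (x : 'cV_(p * q)) i :
  ((\matrix_(i0, j) mxvec (B i0) 0 j) *m x) i 0 = (mxvec (B i) *m x) 0 0.
Proof. by rewrite !mxE; apply: eq_bigr => j _; rewrite mxE. Qed.

Lemma span_dual p q m (B : 'I_m -> 'M[R]_(p, q)) (X : 'M[R]_(p, q)) :
  (forall S, (forall i, \tr (B i *m S^T) = 0) -> \tr (X *m S^T) = 0) ->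
  exists y : 'I_m -> R, X = \sum_i y i *: B i.
Proof.
move=> H.
have Hx : forall x : 'cV_(p * q), (\matrix_(i, j) mxvec (B i) 0 j) *m x = 0 -> mxvec X *m x = 0.
  move=> x Hx.
  apply/matrixP => a b; rewrite !ord1 mxE.
  have := H (vec_mx x^T) => /= H1.
  rewrite (_ : \sum_j _ = \tr (X *m (vec_mx x^T)^T)).
    rewrite mxE; apply: H1 => i; rewrite trvec vec_mxK trmxK -Gentry Hx mxE //.
  by rewrite trvec vec_mxK trmxK mxE.
have [y Hy] := rowspace_dual Hx.
exists (fun i => y 0 i); apply/matrixP => a b.
rewrite -(mxvecE X) Hy summxE !mxE; apply: eq_bigr => i _.
by rewrite !mxE mxvecE.
Qed.

Lemma range_dual p q m (B : 'I_m -> 'M[R]_(p, q)) (c : 'I_m -> R) :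
  (forall z : 'I_m -> R, \sum_i z i *: B i = 0 -> \sum_i z i * c i = 0) ->
  exists S : 'M_(p, q), forall i, \tr (B i *m S^T) = c i.
Proof.
move=> H.
have Hx : forall x : 'cV_m, (\matrix_(i, j) mxvec (B i) 0 j)^T *m x = 0 ->
    (\row_i c i) *m x = 0.
  move=> x Hx.
  have := H (fun i => x i 0) => /= H1.
  apply/matrixP => a b; rewrite !ord1 !mxE.
  rewrite (_ : \sum_j _ = \sum_i x i 0 * c i).
    apply: H1; apply/matrixP => a' b'.
    move/matrixP: Hx => /(_ (mxvec_index a' b') 0).
    rewrite [X in _ = X]mxE => HH; rewrite summxE; rewrite [X in _ = X]mxE; apply: (etrans _ HH); rewrite !mxE; apply: eq_bigr => i _.
    by rewrite !mxE mxvecE mulrC.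
  by apply: eq_bigr => i _; rewrite mxE mulrC.
have [y Hy] := rowspace_dual Hx.
exists (vec_mx y) => i.
move/matrixP: Hy => /(_ 0 i); rewrite mxE => ->.
rewrite trvec vec_mxK !mxE; apply: eq_bigr => j _.
by rewrite !mxE mulrC.
Qed.
End S.
Section S2.
Variable R : realType.
Lemma dotface d k (A : 'M[R]_(d + k)) U V W Z Rm :
  mxdot A (facemx U V W Z Rm) =
  \tr (U^T *m A *m U *m W) + \tr (U^T *m A *m V *m Z^T)
  + (\tr (V^T *m A *m U *m Z) + \tr (V^T *m A *m V *m Rm)).
Proof.
have HP : (row_mx U V)^T *m A *m row_mx U V = block_mx (U^T *m A *m U)
    (U^T *m A *m V) (V^T *m A *m U) (V^T *m A *m V).
  by rewrite tr_row_mx !mul_col_mx !mul_mx_row -block_mxEv.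
rewrite /mxdot /facemx !mulmxA mxtrace_mulC !mulmxA HP.
rewrite mulmx_block mxtrace_block !mxtraceD. done.
Qed.

Lemma dotshift d k (A : 'M[R]_(d + k)) U V W Z Rm (s : R) T :
  mxdot A (facemx U V W Z (Rm + s *: T)) =
  mxdot A (facemx U V W Z Rm) + s * \tr (V^T *m A *m V *m T).
Proof.
rewrite !dotface mulmxDr mxtraceD -scalemxAr mxtraceZ; ring.
Qed.

Lemma mxdot_lin n m (C : 'M[R]_n) (A : 'I_m -> 'M[R]_n) y X :
  mxdot C X = mxdot (Lmap C A y) X + \sum_i y i * mxdot (A i) X.
Proof.
rewrite /mxdot /Lmap mulmxBl (raddfB (@mxtrace R n)) mulmx_suml (raddf_sum (@mxtrace R n)) /=.
under eq_bigr do rewrite -scalemxAl mxtraceZ.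
by rewrite subrK.
Qed.

Lemma Lconj n m p q (C : 'M[R]_n) (A : 'I_m -> 'M[R]_n) y (X : 'M_(p, n)) (Y : 'M_(n, q)) :
  X *m Lmap C A y *m Y = X *m C *m Y - \sum_i y i *: (X *m A i *m Y).
Proof.
rewrite /Lmap mulmxBr mulmxBl mulmx_sumr mulmx_suml; congr (_ - _).
by apply: eq_bigr => i _; rewrite -scalemxAr -scalemxAl.
Qed.

Lemma Lsym n m (C : 'M[R]_n) (A : 'I_m -> 'M[R]_n) y :
  symmx C -> (forall i, symmx (A i)) -> symmx (Lmap C A y).
Proof.
rewrite /symmx /Lmap => hC hA; rewrite linearB /= linear_sum /= hC.
by congr (_ - _); apply: eq_bigr => i _; rewrite linearZ /= hA.
Qed.

Lemma trsym n (B S : 'M[R]_n) : B^T = B -> \tr (B *m S) = \tr (B *m S^T).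
Proof. by move=> hB; rewrite -mxtrace_tr trmx_mul hB mxtrace_mulC. Qed.

Lemma sum_tr m p q (z : 'I_m -> R) (X : 'I_m -> 'M[R]_(p, q)) (Y : 'M[R]_(q, p)) :
  \sum_i z i * \tr (X i *m Y) = \tr ((\sum_i z i *: X i) *m Y).
Proof.
rewrite mulmx_suml raddf_sum /=; apply: eq_bigr => i _.
by rewrite -scalemxAl mxtraceZ.
Qed.
End S2.

Theorem mainTheorem12 (R : realType) (d k m : nat)
  (C : 'M[R]_(d + k)) (A : 'I_m -> 'M[R]_(d + k)) (b : 'I_m -> R)
  (U : 'M[R]_(d + k, d)) (V : 'M[R]_(d + k, k)) :
  symmx C -> (forall i, symmx (A i)) ->
  row_mx U V \in unitmx ->
  U^T *m V = 0 ->
  (exists W Z Rm, RD_optimal C A b U V W Z Rm) ->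
  (forall y : 'I_m -> R,
     V^T *m Lmap C A y *m V = 0 <->
     (V^T *m Lmap C A y *m V = 0 /\ V^T *m Lmap C A y *m U = 0)) ->
  exists (W : 'M[R]_d) (Rm : 'M[R]_k), RD_optimal C A b U V W 0 Rm.
Proof.
move=> hC hA _ _ [W [Z [Rm [[hW [hR hb]] hopt]]]] hyp.
pose B i := V^T *m A i *m V.
have Bsym : forall i, (B i)^T = B i.
  by move=> i; rewrite /B !trmx_mul trmxK hA mulmxA.
have Cvsym : (V^T *m C *m V)^T = V^T *m C *m V.
  by rewrite !trmx_mul trmxK hC mulmxA.
have stepA : forall S, (forall i, \tr (B i *m S^T) = 0) ->
    \tr (V^T *m C *m V *m S^T) = 0.
  move=> S HS.
  pose T := S + S^T.
  have hTs : forall i, \tr (B i *m T) = 0.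
    by move=> i; rewrite mulmxDr mxtraceD (trsym S (Bsym i)) HS addr0.
  have feas : forall s : R, RD_feasible A b U V W Z (Rm + s *: T).
    move=> s; split=> //; split.
      by rewrite /symmx linearD /= linearZ /= hR /T linearD /= trmxK (addrC S^T).
    by move=> i; rewrite dotshift hTs mulr0 addr0 hb.
  have h1 := hopt _ _ _ (feas 1); have h2 := hopt _ _ _ (feas (-1)).
  rewrite dotshift in h1; rewrite dotshift in h2.
  have : \tr (V^T *m C *m V *m T) = 0 by lra.
  by rewrite mulmxDr mxtraceD (trsym S Cvsym); lra.
have [y hy] := span_dual stepA.
have hVV : V^T *m Lmap C A y *m V = 0 by rewrite Lconj hy subrr.
have hVU : V^T *m Lmap C A y *m U = 0 by case: (hyp y) => /(_ hVV) [].
have hUV : U^T *m Lmap C A y *m V = 0.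
  have := Lsym y hC hA; rewrite /symmx => hL.
  have <- : (V^T *m Lmap C A y *m U)^T = U^T *m Lmap C A y *m V.
    by rewrite !trmx_mul trmxK hL mulmxA.
  by rewrite hVU trmx0.
pose c i := \tr (V^T *m A i *m U *m Z) + \tr (U^T *m A i *m V *m Z^T)
  + \tr (B i *m Rm).
have stepC : forall z : 'I_m -> R, \sum_i z i *: B i = 0 -> \sum_i z i * c i = 0.
  move=> z hz.
  have hVV' : V^T *m Lmap C A (fun i => y i + z i) *m V = 0.
    rewrite Lconj.
    under eq_bigr do rewrite scalerDl.
    by rewrite big_split /= -hy hz addr0 subrr.
  have hVU' : V^T *m Lmap C A (fun i => y i + z i) *m U = 0.
    by case: (hyp (fun i => y i + z i)) => /(_ hVV') [].
  move: hVU' hVU; rewrite !Lconj.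
  under eq_bigr do rewrite scalerDl.
  rewrite big_split /= opprD addrA => h1 h2.
  move: h1; rewrite h2 sub0r => /eqP; rewrite oppr_eq0 => /eqP hDu.
  have hDu' : \sum_i z i *: (U^T *m A i *m V) = 0.
    rewrite -[LHS]trmxK linear_sum /=.
    rewrite (eq_bigr (fun i => z i *: (V^T *m A i *m U))) ?hDu ?trmx0 //.
    by move=> i _; rewrite linearZ /= !trmx_mul trmxK hA mulmxA.
  rewrite /c.
  under eq_bigr do rewrite !mulrDr.
  rewrite !big_split /= !sum_tr hDu hDu' hz !mul0mx !mxtrace0.
  by rewrite !addr0.
have [S hS] := range_dual stepC.
pose R' := 2^-1 *: (S + S^T).
have hR'sym : symmx R'.
  by rewrite /symmx /R' linearZ /= linearD /= trmxK addrC.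
have hBR : forall i, \tr (B i *m R') = c i.
  move=> i; rewrite /R' -scalemxAr mxtraceZ mulmxDr mxtraceD.
  rewrite (trsym S (Bsym i)) hS; lra.
have feas : RD_feasible A b U V W 0 R'.
  split; first exact: hW. split; first exact: hR'sym. move=> j.
  rewrite dotface trmx0 !mulmx0 !mxtrace0 add0r hBR -(hb j) dotface /c; ring.
have objv : forall W2 Z2 R2, RD_feasible A b U V W2 Z2 R2 ->
    mxdot C (facemx U V W2 Z2 R2) =
    \tr (U^T *m Lmap C A y *m U *m W2) + \sum_i y i * b i.
  move=> W2 Z2 R2 [_ [_ hb2]].
  rewrite (mxdot_lin C A y) dotface hUV hVU hVV !mul0mx !mxtrace0 !addr0.
  by congr (_ + _); apply: eq_bigr => i _; rewrite hb2.
exists W, R'; split=> // W2 Z2 R2 hf2.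
rewrite objv // -(objv W Z Rm) //; first exact: hopt.
Qed.
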